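(* Let $t\ge0$ and $b_0,\dots,b_t\ge0$ be integers and let $M=\{0^{(b_0)},1^{(b_1)},\dots,t^{(b_t)}\}$ be the multiset containing $b_i$ copies of $i$. Then the number of vn-arrangements of $M$ is \[\prod_{i=0}^{t-1}\binom{b_i+b_{i+1}}{b_i}.\]
   Context: Let $b=b_0+\cdots+b_t$. A vn-arrangement of the multiset $M$ is a sequence $(v_1,\dots,v_b)$ that lists the elements of $M$ with their multiplicities (i.e., an arrangement of $M$) such that $v_{i+1}-v_i\le1$ for all $1\le i<b$. An empty product equals $1$. *)

(* Defs.v *)
From mathcomp Require Import all_boot.
Set Implicit Arguments. Unset Strict Implicit. Unset Printing Implicit Defensive.

Definition msetM (t : nat) (b : nat -> nat) : seq nat :=
  flatten [seq nseq (b i) i | i <- iota 0 t.+1].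

(* v_{i+1} - v_i <= 1 (integer difference), i.e. v_{i+1} <= v_i + 1. *)
Definition vn_cond (s : seq nat) : bool :=
  sorted (fun x y => y <= x.+1) s.

Definition vn_arrangements (t : nat) (b : nat -> nat) : seq (seq nat) :=
  [seq s <- undup (permutations (msetM t b)) | vn_cond s].

(* Main.v *)
Require Import Defs.
From mathcomp Require Import all_boot zify.
Set Implicit Arguments. Unset Strict Implicit. Unset Printing Implicit Defensive.

Lemma perm_countE (u v : seq nat) :
  perm_eq u v <-> (forall y, count_mem y u = count_mem y v).
Proof.
split; first by move/permP => H y; exact: H.
by move=> H; apply/allP => y _; apply/eqP.
Qed.

Lemma count_M t b y : count_mem y (msetM t b) = (y <= t) * b y.
Proof.
elim: t => [|t IH].
  rewrite /msetM /= cats0 count_nseq /=.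
  by case: y => [|y] /=; rewrite ?mul1n ?mul0n ?muln0.
have -> : msetM t.+1 b = msetM t b ++ nseq (b t.+1) t.+1.
  by rewrite /msetM -addn1 iotaD map_cat flatten_cat /= cats0.
rewrite count_cat IH count_nseq /=.
case: (ltngtP y t.+1) => [h|h|->].
- lia.
- have h1 : (y <= t) = false by apply/negbTE; rewrite -ltnNge; apply: ltnW.
  rewrite h1; lia.
- rewrite ltnn; lia.
Qed.

Lemma mem_M t b z : z \in msetM t b -> z <= t.
Proof.
rewrite -has_pred1 has_count count_M.
by case: (z <= t).
Qed.

Lemma count_filterC (c y : nat) x :
  count_mem y [seq z <- x | z != c] = (y != c) * count_mem y x.
Proof.
elim: x => [|z x IH] /=; first by rewrite muln0.
case: (eqVneq z c) => [->|hz] /=; rewrite ?IH.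
  by case: (eqVneq y c) => [->|hy].
case: (eqVneq y c) => [->|hy] /=.
  by rewrite (negbTE hz).
lia.
Qed.

Fixpoint cond (c : nat) (p : bool) (x : seq nat) : bool :=
  if x is z :: w then (if z == c then p && cond c true w else cond c (z == c.-1) w) else true.

Definition Rvn (u v : nat) : bool := v <= u.+1.

Lemma path_split c x : 0 < c -> all (fun z => z <= c) x ->
  (forall a, a < c -> path Rvn a x = path Rvn a [seq z <- x | z != c] && cond c (a == c.-1) x) /\
  (path Rvn c x = path Rvn c.-1 [seq z <- x | z != c] && cond c true x).
Proof.
move=> c0; elim: x => [|z x IH] //= /andP [zc /IH [IHS IHT]].
case: (eqVneq z c) => [->|zc'] /=.
- split.
  + move=> a ac; rewrite IHT /Rvn.
    case: (eqVneq a c.-1) => [->|ha].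
      by rewrite prednK // leqnn.
    have -> : (c <= a.+1) = false by apply/negbTE; move/eqP: ha; lia.
    by rewrite andbF.
  + by rewrite /Rvn leqnSn IHT.
- have zc2 : z < c by rewrite ltn_neqAle zc' zc.
  split.
  + by move=> a ac; rewrite (IHS z) // andbA.
  + by rewrite (IHS z) // /Rvn prednK // zc (leqW zc).
Qed.

Lemma vn_split c x : 0 < c -> all (fun z => z <= c) x ->
  vn_cond x = vn_cond [seq z <- x | z != c] && cond c true x.
Proof.
move=> c0 hx.
have E : forall y, all (fun z => z <= c) y -> vn_cond y = path Rvn c.-1 y.
  by case=> [|z y] //= /andP [zc _]; rewrite /Rvn prednK // zc.
have [S _] := path_split c0 hx.
rewrite E // (S c.-1) ?eqxx ?E //; last by rewrite prednK.
by rewrite all_filter; apply: sub_all hx => z /= ->; rewrite implybT.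
Qed.

Fixpoint gen (c : nat) (p : bool) (s : seq nat) (n : nat) {struct s} : seq (seq nat) :=
  match s with
  | [::] => let fix g m := (if m is m'.+1 then (if p then map (cons c) (g m') else [::]) else [::])
                          ++ (if m == 0 then [:: [::]] else [::]) in g n
  | y :: s' => let fix g m := (if m is m'.+1 then (if p then map (cons c) (g m') else [::]) else [::])
                          ++ map (cons y) (gen c (y == c.-1) s' m) in g n
  end.

Lemma gen_nil c p n : gen c p [::] n =
  (if n is m.+1 then (if p then map (cons c) (gen c p [::] m) else [::]) else [::])
  ++ (if n == 0 then [:: [::]] else [::]).
Proof. by case: n. Qed.

Lemma gen_cons c p y s n : gen c p (y :: s) n =
  (if n is m.+1 then (if p then map (cons c) (gen c p (y :: s) m) else [::]) else [::])
  ++ map (cons y) (gen c (y == c.-1) s n).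
Proof. by case: n. Qed.

Lemma size_gen c p s n :
  size (gen c p s n) = 'C((count_mem c.-1 s + p + n).-1, n).
Proof.
elim: s p n => [|y s IH] p n.
  elim: n => [|n IHn]; first by rewrite gen_nil bin0.
  rewrite gen_nil -[n.+1 == 0]/false cats0.
  case: p IHn => IHn; rewrite ?size_map ?IHn /= ?add0n.
    by rewrite !binn.
  by rewrite bin_small.
elim: n => [|n IHn]; rewrite gen_cons size_cat ?size_map IH.
  by rewrite !bin0.
case: p IHn => IHn; rewrite ?size_map ?IHn /=.
  have -> : ((y == c.-1) + count_mem c.-1 s + 1 + n.+1).-1 = (count_mem c.-1 s + (y == c.-1) + n).+1 by lia.
  have -> : (count_mem c.-1 s + (y == c.-1) + n.+1).-1 = count_mem c.-1 s + (y == c.-1) + n by lia.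
  have -> : ((y == c.-1) + count_mem c.-1 s + 1 + n).-1 = count_mem c.-1 s + (y == c.-1) + n by lia.
  by rewrite binS addnC.
have E : forall u v : nat, u = v -> 0 + 'C(u, n.+1) = 'C(v, n.+1) by move=> u v ->.
apply: E; lia.
Qed.

Lemma cons_inj (z : nat) : injective (cons z).
Proof. by move=> a a' []. Qed.

Lemma mem_cons_map (c z : nat) w (G : seq (seq nat)) :
  (z :: w \in map (cons c) G) = (z == c) && (w \in G).
Proof.
apply/mapP/andP => [[w' h [-> ->]]|[/eqP -> h]]; first by rewrite eqxx.
by exists w.
Qed.

Lemma nil_map (c : nat) (G : seq (seq nat)) : ([::] \in map (cons c) G) = false.
Proof. by apply/negbTE/mapP => [[]]. Qed.

Lemma gen_uniq c p s n : c \notin s -> uniq (gen c p s n).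
Proof.
elim: s p n => [|y s IH] p n.
  move=> _; elim: n => [|n IHn]; rewrite gen_nil //.
  rewrite -[n.+1 == 0]/false cats0; case: p IHn => IHn //.
  by rewrite (map_inj_uniq (@cons_inj c)).
rewrite inE negb_or => /andP [cy cs].
elim: n => [|n IHn]; rewrite gen_cons.
  by rewrite cat0s (map_inj_uniq (@cons_inj y)) IH.
case: p IHn => IHn; last by rewrite cat0s (map_inj_uniq (@cons_inj y)) IH.
rewrite cat_uniq (map_inj_uniq (@cons_inj y)) IH // (map_inj_uniq (@cons_inj c)) IHn /= andbT.
apply/hasPn => x /mapP [w _ ->]; rewrite mem_cons_map.
by rewrite eq_sym (negbTE cy).
Qed.

Lemma mem_gen c p s n x : c \notin s ->
  (x \in gen c p s n) = [&& [seq z <- x | z != c] == s, count_mem c x == n & cond c p x].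
Proof.
elim: s p n x => [|y s IH] p n x.
  move=> _; elim: n x => [|n IHn] x.
    rewrite gen_nil cat0s mem_seq1.
    case: x => [|z w] //=.
    by case: (eqVneq z c) => [->|hz] /=; rewrite ?eqxx // ?andbF.
  rewrite gen_nil -[n.+1 == 0]/false cats0.
  case: x => [|z w]; first by case: p IHn => IHn //; rewrite nil_map.
  case: (eqVneq z c) => [->|hz] /=.
    rewrite eqxx /= eqSS.
    case: p IHn => IHn; rewrite ?mem_cons_map ?eqxx ?IHn //=.
    by rewrite !andbF.
  rewrite (negbTE hz) /=.
  by case: p IHn => IHn //; rewrite mem_cons_map (negbTE hz).
rewrite inE negb_or => /andP [cy cs].
elim: n x => [|n IHn] x; rewrite gen_cons mem_cat.
  case: x => [|z w]; first by rewrite nil_map.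
  rewrite mem_cons_map IH //=.
  case: (eqVneq z c) => [->|hz] /=.
    by rewrite (negbTE cy) andbF.
  rewrite eqseq_cons.
  by case: (eqVneq z y) => [->|hzy] //=.
case: x => [|z w]; first by case: p IHn => IHn //; rewrite !nil_map.
set G := gen c p (y :: s) n in IHn *.
rewrite mem_cons_map IH //=.
case: (eqVneq z c) => [->|hz] /=.
  case: (eqVneq c y) => [e|_]; first by rewrite e eqxx in cy.
  rewrite andFb orbF.
  case: p G IHn => G IHn; rewrite ?mem_cons_map ?eqxx ?IHn //=.
  by rewrite !andbF.
have -> : (z :: w \in (if p then [seq c :: i | i <- G] else [::])) = false.
  by case: p G IHn => G IHn //; rewrite mem_cons_map (negbTE hz).
rewrite orFb eqseq_cons.
by case: (eqVneq z y) => [->|hzy] //=.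
Qed.


Lemma memA t b x : (x \in vn_arrangements t b) = perm_eq x (msetM t b) && vn_cond x.
Proof. by rewrite /vn_arrangements mem_filter mem_undup mem_permutations andbC. Qed.

Lemma uniqA t b : uniq (vn_arrangements t b).
Proof. exact: filter_uniq (undup_uniq _). Qed.

Lemma sumn_const (T : Type) (s : seq T) k : sumn [seq k | _ <- s] = size s * k.
Proof. by elim: s => [|x s IH] //=; rewrite IH mulSn. Qed.

Lemma A0 b : size (vn_arrangements 0 b) = 1.
Proof.
have : perm_eq (vn_arrangements 0 b) [:: nseq (b 0) 0].
  apply: uniq_perm => //; first exact: uniqA.
  move=> x; rewrite memA mem_seq1.
  have -> : msetM 0 b = nseq (b 0) 0 by rewrite /msetM /= cats0.
  apply/andP/eqP => [[hp _]|->].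
    have hs := perm_size hp; rewrite size_nseq in hs.
    rewrite -hs; apply/all_pred1P/allP => z hz.
    by move: (hz); rewrite (perm_mem hp) mem_nseq => /andP [].
  split; first exact: perm_refl.
  rewrite /vn_cond; case: (b 0) => [|k] //=.
  by elim: k => [|k IH] //=.
by move/perm_size.
Qed.

Lemma notin_A t b s c : s \in vn_arrangements t b -> t < c -> c \notin s.
Proof.
rewrite memA => /andP [hp _] tc; apply/negP => hc.
have hc' : c \in msetM t b by rewrite -(perm_mem hp).
by move: (leq_trans tc (mem_M hc')); rewrite ltnn.
Qed.

Lemma step t b : size (vn_arrangements t.+1 b) =
  size (vn_arrangements t b) * 'C(b t + b t.+1, b t).
Proof.
set c := t.+1; set n := b c.
pose L := [seq y | s <- vn_arrangements t b, y <- gen c true s n].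
have c0 : 0 < c by [].
have uL : uniq L.
  apply: allpairs_uniq_dep; first exact: uniqA.
    by move=> s hs; apply: gen_uniq; apply: (notin_A hs).
  move=> [s1 y1] [s2 y2] /allpairsPdep [s1' [y1' [hs1 hy1 e1]]]
    /allpairsPdep [s2' [y2' [hs2 hy2 e2]]] /= e.
  case: e1 => e1 e1'; case: e2 => e2 e2'.
  subst.
  rewrite mem_gen ?(notin_A hs1) // in hy1.
  rewrite mem_gen ?(notin_A hs2) // in hy2.
  case/and3P: hy1 => /eqP h1 _ _; case/and3P: hy2 => /eqP h2 _ _.
  by rewrite -h1 -h2.
have mL : L =i vn_arrangements c b.
  move=> x; apply/allpairsPdep/idP => [[s [y [hs hy ->]]]|hx].
  - have cs := notin_A hs (ltnSn t).
    rewrite mem_gen // in hy; case/and3P: hy => /eqP hf /eqP hc hcond.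
    move: hs; rewrite !memA => /andP [hp hv].
    have hall : all (fun z => z <= c) y.
      apply/allP => z hz; case: (eqVneq z c) => [->//|hzc].
      have : z \in s by rewrite -hf mem_filter hzc.
      by rewrite (perm_mem hp) => /mem_M /leqW.
    rewrite (vn_split c0 hall) hf hv hcond !andbT.
    apply/(perm_countE _ _) => z; rewrite count_M.
    case: (eqVneq z c) => [->|hzc]; first by rewrite hc leqnn mul1n.
    have := count_filterC c z y; rewrite hf hzc mul1n => <-.
    by rewrite ((perm_countE _ _).1 hp) count_M (leq_eqVlt z c) (negbTE hzc).
  - move: (hx); rewrite memA => /andP [hp hv].
    have hall : all (fun z => z <= c) x.
      by apply/allP => z hz; apply: (@mem_M c b); rewrite -(perm_mem hp).
    rewrite (vn_split c0 hall) in hv; case/andP: hv => hv1 hv2.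
    exists [seq z <- x | z != c], x; split => //.
    + rewrite memA hv1 andbT.
      apply/(perm_countE _ _).2 => z; rewrite count_filterC ((perm_countE _ _).1 hp) !count_M.
      case: (eqVneq z c) => [->|hzc]; first by rewrite /c ltnn.
      rewrite (leq_eqVlt z c) (negbTE hzc) /c ltnS /=; lia.
    + rewrite mem_gen; last by rewrite mem_filter eqxx.
      by rewrite eqxx hv2 ((perm_countE _ _).1 hp) count_M leqnn mul1n eqxx.
rewrite -(perm_size (uniq_perm uL (uniqA _ _) mL)) size_allpairs_dep.
have -> : [seq size (gen c true s n) | s <- vn_arrangements t b] =
          [seq 'C(b t + n, n) | _ <- vn_arrangements t b].
  apply/eq_in_map => s hs; rewrite size_gen.
  move: hs; rewrite memA => /andP [hp _].
  rewrite ((perm_countE _ _).1 hp) count_M leqnn mul1n.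
  by congr 'C(_, _); rewrite addn1 addSn.
rewrite sumn_const; congr (_ * _).
by rewrite -bin_sub ?leq_addl // addnK.
Qed.

Theorem proposition4p1 (t : nat) (b : nat -> nat) :
  size (vn_arrangements t b) = \prod_(0 <= i < t) 'C(b i + b i.+1, b i).
Proof.
elim: t => [|t IH]; first by rewrite A0 big_geq.
by rewrite step IH big_nat_recr.
Qed.
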